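(* Consider the algebra of Laurent polynomials in nonzero variables $a,b,c,d,e,f,h$ with coefficients polynomial in a central parameter $G_1$, with the log-canonical Poisson bracket determined by $\{a,b\}=0,\ \{a,c\}=-\tfrac12 ac,\ \{a,d\}=-\tfrac12 ad,\ \{a,e\}=0,\ \{a,f\}=\tfrac12 af,\ \{a,h\}=\tfrac12 ah,$ $\{b,c\}=\tfrac14 bc,\ \{b,d\}=0,\ \{b,e\}=\tfrac14 be,\ \{b,f\}=\tfrac14 bf,\ \{b,h\}=-\tfrac14 bh,$ $\{c,d\}=-\tfrac14 cd,\ \{c,e\}=\tfrac14 ce,\ \{c,f\}=0,\ \{c,h\}=\tfrac14 ch,$ $\{d,e\}=-\tfrac14 de,\ \{d,f\}=\tfrac14 df,\ \{d,h\}=\tfrac14 dh,$ $\{e,f\}=-\tfrac14 ef,\ \{e,h\}=0,\ \{f,h\}=\tfrac14 fh$. Then $bdeh$ and $G_1$ are Casimir elements, and the symplectic leaves are $6$-dimensional.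
   Context: A log-canonical bracket is extended from the generators to all Laurent polynomials by bilinearity, antisymmetry and the Leibniz rule. (These variables are the $\lambda$-lengths of a complete system of arcs on a Riemann sphere with two holes, one without cusps and one with four bordered cusps — the $PIV$ case.) *)

(* Defs.v *)
From HB Require Import structures.
From mathcomp Require Import all_boot all_order all_algebra.
From mathcomp Require Import finmap.
From mathcomp Require Import monalg.
Set Implicit Arguments. Unset Strict Implicit. Unset Printing Implicit Defensive.
Import Order.TTheory GRing.Theory Num.Theory.
Local Open Scope ring_scope.

Section PIV.
Variable R : numFieldType.

(* Variables a,b,c,d,e,f,h are indexed 0,...,6 (in this order). *)
Definition expo := 'rV[int]_7.

(* Laurent polynomials in a..h with coefficients in R[G1] (polynomials in
   the central parameter G1). *)
Definition Laurent := {malg {poly R}[expo]}.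

(* The matrix of log-canonical coefficients omega: {x_i, x_j} = omega i j x_i x_j,
   given for i < j, extended antisymmetrically. *)
Definition omega_up (i j : nat) : R :=
  match i, j with
  | 0, 1 => 0        | 0, 2 => - (1/2)  | 0, 3 => - (1/2)
  | 0, 4 => 0        | 0, 5 => 1/2      | 0, 6 => 1/2
  | 1, 2 => 1/4      | 1, 3 => 0        | 1, 4 => 1/4
  | 1, 5 => 1/4      | 1, 6 => - (1/4)
  | 2, 3 => - (1/4)  | 2, 4 => 1/4      | 2, 5 => 0      | 2, 6 => 1/4
  | 3, 4 => - (1/4)  | 3, 5 => 1/4      | 3, 6 => 1/4
  | 4, 5 => - (1/4)  | 4, 6 => 0
  | 5, 6 => 1/4
  | _, _ => 0
  end.

Definition omega : 'M[R]_7 :=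
  \matrix_(i, j) (if (i < j)%N then omega_up i j
                  else if (j < i)%N then - omega_up j i else 0).

(* Bilinear pairing of exponent vectors: {x^al, x^be} = (al^T omega be) x^(al+be). *)
Definition pairing (al be : expo) : R :=
  \sum_(i < 7) \sum_(j < 7) (al 0 i)%:~R * omega i j * (be 0 j)%:~R.

(* The log-canonical bracket, extended from the generators to all Laurent
   polynomials by bilinearity, antisymmetry and the Leibniz rule
   (coefficients in R[G1] are central). *)
Definition bracket (F H : Laurent) : Laurent :=
  \sum_(al <- msupp F) \sum_(be <- msupp H)
     << (F@_al * H@_be * (pairing al be)%:P) *g (al + be) >>.

Definition var (i : 'I_7) : Laurent := << (delta_mx 0 i : expo) >>.
Definition va := var (@Ordinal 7 0 isT).
Definition vb := var (@Ordinal 7 1 isT).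
Definition vc := var (@Ordinal 7 2 isT).
Definition vd := var (@Ordinal 7 3 isT).
Definition ve := var (@Ordinal 7 4 isT).
Definition vf := var (@Ordinal 7 5 isT).
Definition vh := var (@Ordinal 7 6 isT).

Definition G1 : Laurent := << ('X : {poly R}) *g (0 : expo) >>.

Definition bdeh : Laurent :=
  << (delta_mx 0 (@Ordinal 7 1 isT) + delta_mx 0 (@Ordinal 7 3 isT)
      + delta_mx 0 (@Ordinal 7 4 isT) + delta_mx 0 (@Ordinal 7 6 isT) : expo) >>.

Definition casimir (C : Laurent) : Prop := forall F : Laurent, bracket C F = 0.

(* Evaluation of a Laurent polynomial at a point (g, x) with g the value of G1
   and x in the torus (all coordinates nonzero). *)
Definition evalL (g : R) (x : 'I_7 -> R) (F : Laurent) : R :=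
  \sum_(al <- msupp F) (F@_al).[g] * \prod_(i < 7) x i ^ (al 0 i).

(* Coordinate functions on the 8-dimensional space (a,b,c,d,e,f,h,G1). *)
Definition coord (k : 'I_8) : Laurent :=
  match split (k : 'I_(7 + 1)) with
  | inl i => var i
  | inr _ => G1
  end.

Definition poisson_tensor (g : R) (x : 'I_7 -> R) : 'M[R]_8 :=
  \matrix_(k, l) evalL g x (bracket (coord k) (coord l)).

End PIV.

(* Main.v *)
Require Import Defs.
From HB Require Import structures.
From mathcomp Require Import all_boot all_order all_algebra.
From mathcomp Require Import finmap monalg ring.
Import Order.TTheory GRing.Theory Num.Theory.
Local Open Scope ring_scope.

Section H.
Variable R : numFieldType.

Lemma sum_msuppU (T : nmodType) (c : {poly R}) (k : expo) (Fn : expo -> T) :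
  Fn k = 0 \/ c != 0 ->
  \sum_(al <- msupp (<< c *g k >> : Laurent R)) Fn al = Fn k.
Proof.
move=> H; rewrite msuppU; case: eqP => [c0|/eqP c0].
  case: H => [->|]; first by rewrite big_nil.
  by rewrite c0 eqxx.
by rewrite big_seq_fset1.
Qed.

Lemma bracketU (c1 c2 : {poly R}) (k1 k2 : expo) :
  bracket (<< c1 *g k1 >>) (<< c2 *g k2 >>) =
  << (c1 * c2 * (pairing R k1 k2)%:P) *g (k1 + k2) >>.
Proof.
rewrite /bracket.
have [->|c10] := eqVneq c1 0.
  by rewrite monalgU0 msupp0 big_nil !mul0r monalgU0.
rewrite sum_msuppU; last by right.
have [->|c20] := eqVneq c2 0.
  by rewrite monalgU0 msupp0 big_nil !mulr0 mul0r monalgU0.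
by rewrite sum_msuppU ?mcoeffUU //; right.
Qed.

Lemma evalLU g x (c : {poly R}) (k : expo) :
  evalL g x (<< c *g k >>) = c.[g] * \prod_(i < 7) x i ^ (k 0 i).
Proof.
rewrite /evalL sum_msuppU ?mcoeffUU //.
have [->|] := eqVneq c 0; last by right.
by left; rewrite hornerC mul0r.
Qed.

Lemma evalL0 g x : evalL g x (0 : Laurent R) = 0.
Proof. by rewrite /evalL msupp0 big_nil. Qed.

Lemma pairing0 (al be : expo) :
  (forall j : 'I_7, \sum_(i < 7) (al 0 i)%:~R * omega R i j = 0) ->
  pairing R al be = 0.
Proof.
move=> H; rewrite /pairing exchange_big /= big1 // => j _.
by rewrite -mulr_suml H mul0r.
Qed.

Lemma casimirU (c : {poly R}) (al : expo) :
  (forall j : 'I_7, \sum_(i < 7) (al 0 i)%:~R * omega R i j = 0) ->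
  casimir (<< c *g al >>).
Proof.
move=> H F; rewrite /bracket sum_msuppU; last first.
  left; rewrite big1 // => be _; by rewrite pairing0 // mulr0 monalgU0.
by rewrite big1 // => be _; rewrite pairing0 // mulr0 monalgU0.
Qed.

Lemma casG1 : casimir (G1 R).
Proof. apply: casimirU => j; apply: big1 => i _; by rewrite mxE mul0r. Qed.

Lemma casbdeh : casimir (bdeh R).
Proof.
apply: casimirU => j.
do 7 rewrite big_ord_recl; rewrite big_ord0.
rewrite !mxE /=.
case: j => [[|[|[|[|[|[|[|j]]]]]]] Hj] //=; rewrite /omega_up.
all: by field.
Qed.

Definition om (m n : nat) : R :=
  if (m < n)%N then omega_up R m n else if (n < m)%N then - omega_up R n m else 0.

Lemma omegaE (i j : 'I_7) : omega R i j = om i j.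
Proof. by rewrite mxE. Qed.

Lemma pairing_delta (i j : 'I_7) :
  pairing R (delta_mx 0 i) (delta_mx 0 j) = omega R i j.
Proof.
rewrite /pairing (bigD1 i) //= [X in _ + X = _]big1 => [|i' ne]; last first.
  by apply: big1 => jj _; rewrite !mxE eqxx /= (negPf ne) /= !mul0r.
rewrite addr0 (bigD1 j) //= [X in _ + X = _]big1 => [|j' ne]; last first.
  by rewrite !mxE eqxx /= (negPf ne) /= mulr0z mulr0.
by rewrite !mxE !eqxx /= mul1r mulr1 addr0.
Qed.

Lemma pairing_0l (k : expo) : pairing R 0 k = 0.
Proof. by rewrite /pairing; apply: big1 => i _; apply: big1 => j _; rewrite mxE mul0r mul0r. Qed.

Lemma pairing_0r (k : expo) : pairing R k 0 = 0.
Proof. by rewrite /pairing; apply: big1 => i _; apply: big1 => j _; rewrite !mxE mulr0z mulr0. Qed.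

Lemma prod_delta1 (x : 'I_7 -> R) (i : 'I_7) :
  \prod_(t < 7) x t ^ ((delta_mx 0 i : expo) 0 t) = x i.
Proof.
rewrite (bigD1 i) //= big1 => [|t ne]; last by rewrite !mxE eqxx /= (negPf ne) expr0z.
by rewrite !mxE !eqxx expr1z mulr1.
Qed.

Lemma prod_delta2 (x : 'I_7 -> R) (i j : 'I_7) : (forall t, x t != 0) ->
  \prod_(t < 7) x t ^ ((delta_mx 0 i + delta_mx 0 j : expo) 0 t) = x i * x j.
Proof.
move=> H.
rewrite -(prod_delta1 x i) -(prod_delta1 x j) -big_split /=.
by apply: eq_bigr => t _; rewrite [in LHS]mxE expfzDr.
Qed.

Definition Om8 : 'M[R]_8 :=
  \matrix_(k, l) (if ((k < 7) && (l < 7))%N then om k l else 0).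

Definition dv (x : 'I_7 -> R) : 'rV[R]_8 :=
  \row_k (match split (k : 'I_(7+1)) with inl i => x i | inr _ => 1 end).

Lemma tensorE (g : R) (x : 'I_7 -> R) : (forall t, x t != 0) ->
  poisson_tensor g x = diag_mx (dv x) *m Om8 *m diag_mx (dv x).
Proof.
move=> Hx; apply/matrixP => k l; rewrite mul_mx_diag mul_diag_mx !mxE /Defs.coord.
case: (splitP (k : 'I_(7+1))) => [i Hi|i Hi];
case: (splitP (l : 'I_(7+1))) => [j Hj|j Hj]; rewrite Hi Hj.
- rewrite /var bracketU evalLU prod_delta2 // pairing_delta /= -omegaE.
  rewrite !mul1r hornerC; ring.
- by rewrite /var /G1 bracketU pairing_0r polyC0 mulr0 monalgU0 evalL0 /= mulr0 mul0r.
- by rewrite /var /G1 bracketU pairing_0l polyC0 mulr0 monalgU0 evalL0 /= mulr0 mul0r.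
- by rewrite /G1 bracketU pairing_0l polyC0 mulr0 monalgU0 evalL0 /= mulr0 mul0r.
Qed.

Definition bf (i k : nat) : R :=
  if (i < 6)%N then (i == k)%:R
  else if i == 6 then - ((k == 1) || (k == 3) || (k == 4))%:R else 0.

Definition Bm : 'M[R]_(8, 6) := \matrix_(i, k) bf i k.
Definition Cm : 'M[R]_(6, 8) := \matrix_(k, l) (if (l < 7)%N then om k l else 0).
Definition Lm : 'M[R]_(6, 8) := \matrix_(k, i) (k == i :> nat)%:R.

Definition minv : seq (seq R) :=
  [:: [:: 0; 0; 1; 0; 0; -1];
      [:: 0; 0; 0; -2; -2; -2];
      [:: -1; 0; 0; 1; -1; 1];
      [:: 0; 2; -1; 0; 2; -1];
      [:: 0; 2; 1; -2; 0; -1];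
      [:: 1; 2; -1; 1; 1; 0]].

Definition Rm : 'M[R]_(8, 6) :=
  \matrix_(i, j) (if (i < 6)%N then nth 0 (nth [::] minv i) j else 0).

Lemma BC : Om8 = Bm *m Cm.
Proof.
apply/matrixP => -[i Hi] [j Hj]; rewrite !mxE.
rewrite !big_ord_recr big_ord0 /= !mxE /=.
rewrite /bf /om /omega_up.
case: i Hi => [|[|[|[|[|[|[|[|i]]]]]]]] Hi //;
case: j Hj => [|[|[|[|[|[|[|[|j]]]]]]]] Hj //=.
all: by field.
Qed.

Lemma LC : Lm *m Om8 = Cm.
Proof.
apply/matrixP => -[i Hi] [j Hj]; rewrite !mxE.
rewrite !big_ord_recr big_ord0 /= !mxE /=.
rewrite /om /omega_up.
case: i Hi => [|[|[|[|[|[|i]]]]]] Hi //;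
case: j Hj => [|[|[|[|[|[|[|[|j]]]]]]]] Hj //=.
all: by field.
Qed.

Lemma CR : Cm *m Rm = 1%:M.
Proof.
apply/matrixP => -[i Hi] [j Hj]; rewrite !mxE.
rewrite !big_ord_recr big_ord0 /= !mxE /=.
rewrite /om /omega_up.
case: i Hi => [|[|[|[|[|[|i]]]]]] Hi //;
case: j Hj => [|[|[|[|[|[|j]]]]]] Hj //=.
all: by field.
Qed.

Lemma rankOm8 : \rank Om8 = 6%N.
Proof.
apply/eqP; rewrite eqn_leq; apply/andP; split.
  by rewrite BC (leq_trans (mxrankM_maxl _ _)) // rank_leq_col.
rewrite -{1}(mxrank1 R 6) -CR -LC.
apply: (leq_trans (mxrankM_maxl _ _)); exact: mxrankM_maxr.
Qed.

Lemma rank_tensor (g : R) (x : 'I_7 -> R) : (forall t, x t != 0) ->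
  \rank (poisson_tensor g x) = 6%N.
Proof.
move=> Hx; rewrite tensorE //.
have DU : diag_mx (dv x) \in unitmx.
  rewrite unitmxE det_diag unitfE; apply/prodf_neq0 => k _; rewrite mxE.
  by case: (split _) => [i|_] //; rewrite oner_eq0.
rewrite mxrankMfree ?row_free_unit //.
rewrite -[RHS]rankOm8; apply/eqP; rewrite eqn_leq mxrankM_maxr /=.
rewrite -{1}(mulKmx DU Om8); exact: mxrankM_maxr.
Qed.

End H.

Theorem mainTheorem3 (R : numFieldType) :
  casimir (bdeh R) /\ casimir (G1 R) /\
  (forall (g : R) (x : 'I_7 -> R), (forall i, x i != 0) ->
     \rank (poisson_tensor g x) = 6%N).
Proof.
split; first exact: casbdeh.
split; first exact: casG1.
exact: rank_tensor.
Qed.
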